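(* Let $\Gamma$ be a group acting quasi-transitively on a tree $T$ with infinitely many ends, such that the action stabilizes an end of $T$. Then the action of $\Gamma$ on $T$ is not free.
   Context: An action on $T$ is quasi-transitive if $V(T)$ has finitely many orbits. Ends of $T$ are equivalence classes of rays (infinite one-way paths), two rays being equivalent if there are infinitely many disjoint paths between them; $\Gamma$ stabilizes an end if every element maps rays of that end to rays of that end. The action is free if the only element of $\Gamma$ fixing some vertex of $T$ is the identity. *)

(* Defs.v *)
From Stdlib Require Import List.
Set Implicit Arguments.
Import ListNotations.

Section Defs.
Variable V : Type.
Variable adj : V -> V -> Prop.

Fixpoint walk (p : list V) : Prop :=
  match p with
  | x :: ((y :: _) as q) => adj x y /\ walk q
  | _ => True
  end.

Definition is_path (p : list V) : Prop := p <> [] /\ NoDup p /\ walk p.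

Definition connected_graph : Prop :=
  forall x y : V, exists p, is_path p /\ hd_error p = Some x /\ last p x = y.

Definition has_cycle : Prop :=
  exists p : list V, is_path p /\ 3 <= length p /\
    exists x0, hd_error p = Some x0 /\ adj (last p x0) x0.

Definition is_tree : Prop :=
  (forall x y, adj x y -> adj y x) /\ (forall x, ~ adj x x) /\
  connected_graph /\ ~ has_cycle.

Definition ray (r : nat -> V) : Prop :=
  (forall m n, r m = r n -> m = n) /\ (forall n, adj (r n) (r (S n))).

Definition disjoint_lists (p q : list V) : Prop := forall x, In x p -> ~ In x q.

Definition end_equiv (r1 r2 : nat -> V) : Prop :=
  exists P : nat -> list V,
    (forall i, is_path (P i) /\
       exists x, hd_error (P i) = Some x /\
       (exists m, r1 m = x) /\ (exists n, r2 n = last (P i) x)) /\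
    (forall i j, i <> j -> disjoint_lists (P i) (P j)).

Definition infinitely_many_ends : Prop :=
  exists R : nat -> nat -> V,
    (forall i, ray (R i)) /\
    (forall i j, i <> j -> ~ end_equiv (R i) (R j)).
End Defs.
Arguments walk {V}.
Arguments is_path {V}.
Arguments ray {V}.
Arguments end_equiv {V}.
Arguments is_tree {V}.
Arguments infinitely_many_ends {V}.
Arguments connected_graph {V}.
Arguments has_cycle {V}.

Definition is_group (G : Type) (mul : G -> G -> G) (one : G) (inv : G -> G) : Prop :=
  (forall a b c, mul a (mul b c) = mul (mul a b) c) /\
  (forall a, mul one a = a) /\ (forall a, mul a one = a) /\
  (forall a, mul (inv a) a = one) /\ (forall a, mul a (inv a) = one).

Definition is_graph_action (G V : Type) (mul : G -> G -> G) (one : G)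
    (adj : V -> V -> Prop) (act : G -> V -> V) : Prop :=
  (forall v, act one v = v) /\
  (forall g h v, act (mul g h) v = act g (act h v)) /\
  (forall g x y, adj x y <-> adj (act g x) (act g y)).

Definition quasi_transitive (G V : Type) (act : G -> V -> V) : Prop :=
  exists s : list V, forall v, exists u g, In u s /\ act g u = v.

Definition stabilizes_end (G V : Type) (adj : V -> V -> Prop)
    (act : G -> V -> V) (r : nat -> V) : Prop :=
  forall g r', ray adj r' -> end_equiv adj r' r ->
    end_equiv adj (fun n => act g (r' n)) r.

Definition stabilizes_some_end (G V : Type) (adj : V -> V -> Prop)
    (act : G -> V -> V) : Prop :=
  exists r, ray adj r /\ stabilizes_end adj act r.

Definition free_action (G V : Type) (one : G) (act : G -> V -> V) : Prop :=
  forall g v, act g v = v -> g = one.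

(* Main.v *)
From Stdlib Require Import List Lia Arith ZArith Classical ClassicalEpsilon.
Require Import Defs.
Import ListNotations.

Lemma pigeon {A B : Type} (Rel : A -> B -> Prop) : forall (s : list B) (l : list A),
  NoDup l -> (forall a, In a l -> exists b, In b s /\ Rel a b) ->
  (forall a a' b, In a l -> In a' l -> Rel a b -> Rel a' b -> a = a') -> length l <= length s.
Proof.
  induction s as [|b s IH]; intros l Hnd Hex Hu.
  - destruct l as [|a l]; simpl; auto. destruct (Hex a (or_introl eq_refl)) as [? [[] _]].
  - destruct (classic (exists a0, In a0 l /\ Rel a0 b)) as [[a0 [Ha0 Hr0]]|Hno].
    + destruct (in_split _ _ Ha0) as [l1 [l2 ->]].
      assert (Hsub : forall a, In a (l1 ++ l2) -> In a (l1 ++ a0 :: l2)).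
      { intros a Ha. apply in_app_or in Ha. apply in_or_app. simpl. tauto. }
      assert (length (l1 ++ l2) <= length s).
      { apply IH.
        - eapply NoDup_remove_1; eauto.
        - intros a Ha. destruct (Hex a (Hsub a Ha)) as [b' [Hb' Hr]].
          destruct Hb' as [<-|Hb']; eauto.
          exfalso. assert (a = a0) by (apply (Hu a a0 b); auto; apply in_or_app; simpl; auto).
          subst. eapply NoDup_remove_2; eauto.
        - intros a a' b' Ha Ha' Hr Hr'. apply (Hu a a' b'); auto. }
      rewrite length_app in *. simpl. lia.
    + assert (length l <= length s); [|simpl; lia].
      apply IH; auto. intros a Ha. destruct (Hex a Ha) as [b' [Hb' Hr]].
      destruct Hb' as [<-|Hb']; eauto. exfalso; eauto.
Qed.

Section Tree.
Variable V : Type.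
Variable adj : V -> V -> Prop.
Hypothesis Hsym : forall x y, adj x y -> adj y x.
Hypothesis Hirr : forall x, ~ adj x x.
Hypothesis Hcon : connected_graph adj.
Hypothesis Hnc : ~ has_cycle adj.

Definition Rl x y := x = y \/ adj x y.
Fixpoint lwalk (p : list V) : Prop :=
  match p with
  | x :: ((y :: _) as q) => Rl x y /\ lwalk q
  | _ => True
  end.

Lemma walk_lwalk : forall p, walk adj p -> lwalk p.
Proof.
  induction p as [|x [|y q] IH]; simpl; auto.
  intros [H1 H2]. split; [right; auto | apply IH; exact H2].
Qed.

Lemma walk_tail : forall x l, walk adj (x :: l) -> walk adj l.
Proof. intros x [|y l]; simpl; tauto. Qed.

Lemma walk_suffix : forall a b, walk adj (a ++ b) -> walk adj b.
Proof. induction a; simpl; intros b H; auto. apply IHa. eapply walk_tail; eauto. Qed.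

Lemma last_indep : forall (l : list V) d d', l <> [] -> last l d = last l d'.
Proof.
  induction l as [|x [|y l] IH]; intros d d' H; [congruence|reflexivity|].
  simpl. simpl in IH. apply IH. congruence.
Qed.

Lemma last_cons2 : forall (x : V) l d, l <> [] -> last (x :: l) d = last l d.
Proof. intros x [|y l] d H; [congruence|reflexivity]. Qed.

Lemma last_app_ne : forall (a l : list V) d, l <> [] -> last (a ++ l) d = last l d.
Proof.
  induction a as [|y a IH]; intros l d H; [reflexivity|].
  rewrite <- app_comm_cons. rewrite last_cons2; [apply IH; auto|].
  destruct a; simpl; [auto|congruence].
Qed.

Lemma last_In : forall (l : list V) d, l <> [] -> In (last l d) l.
Proof.
  induction l as [|x [|y l] IH]; intros d H; [congruence|simpl;auto|].
  right. apply IH. congruence.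
Qed.

Lemma hd_error_In : forall (l : list V) x, hd_error l = Some x -> In x l.
Proof. intros [|y l] x H; simpl in H; [discriminate|]. inversion H; simpl; auto. Qed.

Lemma hd_rev : forall (l : list V) d, hd d (rev l) = last l d.
Proof.
  induction l as [|x l IH]; intros d; [reflexivity|].
  destruct l as [|y l']; [reflexivity|].
  rewrite last_cons2 by congruence. rewrite <- IH.
  change (rev (x :: y :: l')) with (rev (y :: l') ++ [x]).
  destruct (rev (y :: l')) eqn:E; [|reflexivity].
  apply (f_equal (@length V)) in E. simpl in E. rewrite length_app in E. simpl in E. lia.
Qed.

Lemma last_rev : forall (l : list V) d, last (rev l) d = hd d l.
Proof.
  intros l d. rewrite <- (rev_involutive l) at 2. rewrite hd_rev. reflexivity.
Qed.

Lemma lwalk_tail : forall x l, lwalk (x :: l) -> lwalk l.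
Proof. intros x [|y l]; simpl; tauto. Qed.

Lemma lwalk_app : forall l1 l2 d, lwalk l1 -> lwalk l2 ->
  (l1 <> [] -> l2 <> [] -> Rl (last l1 d) (hd d l2)) -> lwalk (l1 ++ l2).
Proof.
  induction l1 as [|x l1 IH]; intros l2 d H1 H2 H3; simpl; auto.
  destruct l1 as [|y l1'].
  - simpl. destruct l2 as [|z l2]; simpl; auto. split; auto.
    apply H3; congruence.
  - simpl in H1 |- *. destruct H1 as [Hxy H1]. split; auto.
    apply (IH l2 d); auto. intros _ Hn. apply H3; congruence.
Qed.

Lemma lwalk_rev : forall l, lwalk l -> lwalk (rev l).
Proof.
  induction l as [|x l IH]; intros H; simpl; auto.
  apply (lwalk_app _ _ x); [apply IH; eapply lwalk_tail; eauto | simpl; auto |].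
  intros Hn _. destruct l as [|y l]; [simpl in Hn; congruence|].
  rewrite last_rev. simpl. simpl in H. destruct H as [[E|A] _]; [left; auto|right; auto].
Qed.

Lemma erase : forall w, w <> [] -> lwalk w -> exists p, is_path adj p /\
  hd_error p = hd_error w /\ (forall d, last p d = last w d) /\ incl p w.
Proof.
  induction w as [|x w IH]; intros Hne Hw; [congruence|].
  destruct w as [|y w'].
  - exists [x]. split; [|split; [reflexivity|split; [reflexivity| apply incl_refl]]].
    split; [congruence|split; [constructor; [simpl; tauto|constructor]|simpl; auto]].
  - destruct (IH ltac:(congruence) (lwalk_tail _ _ Hw)) as [p' [Hp' [Hh' [Hl' Hi']]]].
    destruct (classic (In x p')) as [Hin|Hnin].
    + destruct (in_split _ _ Hin) as [a [b Eab]].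
      exists (x :: b). destruct Hp' as [_ [Hnd Hwk]]. subst p'.
      split; [split; [congruence|split]|split; [reflexivity|split]].
      * eapply NoDup_app_remove_l; eauto.
      * eapply walk_suffix; eauto.
      * intros d. rewrite (last_cons2 x (y :: w')) by congruence. rewrite <- Hl'.
        rewrite last_app_ne by congruence. reflexivity.
      * intros z Hz. destruct Hz as [<-|Hz]; [left; auto|].
        right. apply Hi'. apply in_or_app. right. right. auto.
    + exists (x :: p'). destruct Hp' as [Hne' [Hnd Hwk]].
      split; [split; [congruence|split]|split; [reflexivity|split]].
      * constructor; auto.
      * destruct p' as [|z p'']; [congruence|]. simpl in Hh'. inversion Hh'; subst z.
        simpl. split; auto. simpl in Hw. destruct Hw as [[E|A] _]; auto.
        subst. exfalso. apply Hnin. left; auto.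
      * intros d. rewrite last_cons2 by auto. rewrite Hl'.
        rewrite (last_cons2 x (y :: w')) by congruence. reflexivity.
      * intros z [<-|Hz]; [left; auto|right; apply Hi'; auto].
Qed.

Lemma NoDup_single_last : forall (x : V) q d, NoDup (x :: q) -> last (x :: q) d = x -> q = [].
Proof.
  intros x [|y q] d H E; auto. exfalso.
  rewrite last_cons2 in E by congruence. assert (Hni : ~ In x (y :: q)) by (inversion H; auto).
  apply Hni. rewrite <- E. apply last_In. congruence.
Qed.

Lemma is_path_tail : forall x y l, is_path adj (x :: y :: l) -> is_path adj (y :: l).
Proof.
  intros x y l [_ [Hn Hw]]. split; [congruence|split].
  - inversion Hn; auto.
  - destruct Hw; auto.
Qed.

Lemma path_unique : forall p q d, is_path adj p -> is_path adj q ->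
  hd_error p = hd_error q -> last p d = last q d -> p = q.
Proof.
  induction p as [|x p IH]; intros q d Hp Hq Hh Hl; [destruct Hp; congruence|].
  destruct q as [|x' q]; [destruct Hq; congruence|].
  simpl in Hh. inversion Hh; subst x'. clear Hh.
  destruct p as [|y p''].
  - symmetry. f_equal. apply (NoDup_single_last x q d); [apply Hq|]. rewrite <- Hl. reflexivity.
  - destruct q as [|z q''].
    + exfalso. assert (E : y :: p'' = []); [|discriminate].
      apply (NoDup_single_last x (y :: p'') d); [apply Hp|]. rewrite Hl; reflexivity.
    + destruct (classic (y = z)) as [<-|Hyz].
      * f_equal. apply (IH (y :: q'') d).
        -- eapply is_path_tail; eauto.
        -- eapply is_path_tail; eauto.
        -- reflexivity.
        -- rewrite <- (last_cons2 x) by congruence. rewrite Hl.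
           apply last_cons2. congruence.
      * exfalso. apply Hnc.
        assert (Hw : lwalk ((y :: p'') ++ rev (z :: q''))).
        { apply (lwalk_app _ _ d).
          - apply walk_lwalk. destruct Hp as [_ [_ Hw]]. apply (walk_tail x). exact Hw.
          - apply lwalk_rev. apply walk_lwalk. destruct Hq as [_ [_ Hw]]. apply (walk_tail x). exact Hw.
          - intros _ _. left. rewrite hd_rev.
            rewrite <- (last_cons2 x) by congruence. rewrite Hl. apply last_cons2. congruence. }
        destruct (erase ((y :: p'') ++ rev (z :: q'')) ltac:(simpl; congruence) Hw) as [pi [Hpi [Hhpi [Hlpi Hipi]]]].
        assert (Hxn : ~ In x pi).
        { intros Hx. apply Hipi in Hx. apply in_app_or in Hx. destruct Hx as [Hx|Hx].
          - destruct Hp as [_ [Hn _]]. inversion Hn; auto.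
          - apply in_rev in Hx. destruct Hq as [_ [Hn _]]. inversion Hn; auto. }
        assert (Hlast : last pi d = z).
        { rewrite Hlpi. rewrite last_app_ne by (simpl; destruct (rev q''); simpl; congruence).
          rewrite last_rev. reflexivity. }
        destruct pi as [|y' pi']; [destruct Hpi; congruence|].
        simpl in Hhpi. inversion Hhpi; subst y'.
        destruct pi' as [|w pi''].
        { simpl in Hlast. congruence. }
        exists (x :: y :: w :: pi''). split; [split; [congruence|split]|split].
        -- constructor; auto. apply Hpi.
        -- split. { destruct Hp as [_ [_ [A _]]]. exact A. } apply Hpi.
        -- simpl. lia.
        -- exists x. split; [reflexivity|].
           rewrite last_cons2 by congruence. rewrite (last_indep _ x d) by congruence.
           rewrite Hlast. apply Hsym. destruct Hq as [_ [_ [A _]]]. exact A.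
Qed.

Lemma cover : forall w p d, w <> [] -> lwalk w -> is_path adj p ->
  hd_error p = hd_error w -> last p d = last w d -> incl p w.
Proof.
  intros w p d Hne Hw Hp Hh Hl.
  destruct (erase w Hne Hw) as [pi [Hpi [Hhpi [Hlpi Hipi]]]].
  assert (pi = p). { apply (path_unique pi p d); auto; congruence. }
  subst; auto.
Qed.

Fixpoint seg (f : nat -> V) (a n : nat) : list V :=
  match n with 0 => [f a] | S n' => f a :: seg f (S a) n' end.

Lemma seg_ne : forall f a n, seg f a n <> [].
Proof. intros f a [|n]; simpl; congruence. Qed.

Lemma seg_hd : forall f a n, hd_error (seg f a n) = Some (f a).
Proof. intros f a [|n]; reflexivity. Qed.

Lemma seg_hd' : forall f a n d, hd d (seg f a n) = f a.
Proof. intros f a [|n]; reflexivity. Qed.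

Lemma seg_last : forall f n a d, last (seg f a n) d = f (a + n).
Proof.
  induction n as [|n IH]; intros a d.
  - simpl. f_equal; lia.
  - change (seg f a (S n)) with (f a :: seg f (S a) n).
    rewrite last_cons2 by apply seg_ne. rewrite IH. f_equal; lia.
Qed.

Lemma seg_In : forall f n a x, In x (seg f a n) <-> exists i, i <= n /\ x = f (a + i).
Proof.
  induction n as [|n IH]; intros a x; simpl; split.
  - intros [<-|[]]. exists 0. split; [lia|f_equal; lia].
  - intros [i [Hi ->]]. left. f_equal. lia.
  - intros [<-|H]. { exists 0. split; [lia|f_equal; lia]. }
    apply IH in H. destruct H as [i [Hi ->]]. exists (S i). split; [lia|f_equal; lia].
  - intros [[|i] [Hi ->]]. { left. f_equal; lia. }
    right. apply IH. exists i. split; [lia|f_equal; lia].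
Qed.

Lemma seg_nth : forall f n a i d, i <= n -> nth i (seg f a n) d = f (a + i).
Proof.
  induction n as [|n IH]; intros a i d Hi.
  - assert (i = 0) by lia. subst. simpl. f_equal; lia.
  - destruct i as [|i]; simpl. { f_equal; lia. }
    rewrite IH by lia. f_equal; lia.
Qed.

Lemma seg_len : forall f n a, length (seg f a n) = S n.
Proof. induction n; intros; simpl; auto. Qed.

Lemma seg_path : forall f a n, ray adj f -> is_path adj (seg f a n).
Proof.
  intros f a n [Hinj Hadj]. revert a. induction n as [|n IH]; intros a.
  - simpl. split; [congruence|split; [constructor; [simpl; tauto|constructor]|simpl; auto]].
  - destruct (IH (S a)) as [_ [Hn Hw]]. split; [simpl; congruence|split].
    + constructor; auto. intros Hin. apply seg_In in Hin. destruct Hin as [i [_ Hi]].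
      apply Hinj in Hi. lia.
    + destruct n; simpl in *; split; auto.
Qed.

Lemma seg_lwalk : forall f a n, ray adj f -> lwalk (seg f a n).
Proof. intros. apply walk_lwalk. apply seg_path. auto. Qed.


Lemma bridge : forall r1 r2 P m n a b pi d,
  ray adj r1 -> ray adj r2 -> is_path adj P -> hd_error P = Some (r1 m) -> last P d = r2 n ->
  a <= m -> b <= n -> is_path adj pi -> hd_error pi = Some (r1 a) -> last pi d = r2 b ->
  forall q, In q pi -> (exists i, a <= i <= m /\ q = r1 i) \/ In q P \/
                       (exists j, b <= j <= n /\ q = r2 j).
Proof.
  intros r1 r2 P m n a b pi d H1 H2 HP HhP HlP Ham Hbn Hpi Hhpi Hlpi q Hq.
  destruct P as [|p0 P']; [destruct HP; congruence|]. simpl in HhP. inversion HhP; subst p0.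
  set (W := seg r1 a (m - a) ++ (r1 m :: P') ++ rev (seg r2 b (n - b))).
  assert (Hrne : rev (seg r2 b (n - b)) <> []).
  { intro E. apply (f_equal (@length V)) in E. rewrite length_rev, seg_len in E. simpl in E. lia. }
  assert (HW : lwalk W).
  { apply (lwalk_app _ _ d).
    - apply seg_lwalk; auto.
    - apply (lwalk_app _ _ d).
      + apply walk_lwalk. apply HP.
      + apply lwalk_rev. apply seg_lwalk; auto.
      + intros _ _. left. rewrite hd_rev, seg_last, HlP. f_equal. lia.
    - intros _ _. left. rewrite seg_last. simpl. f_equal. lia. }
  assert (Hinc : incl pi W).
  { apply (cover W pi d).
    - unfold W. destruct (m - a); simpl; congruence.
    - exact HW.
    - exact Hpi.
    - rewrite Hhpi. unfold W. rewrite <- (seg_hd r1 a (m - a)).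
      destruct (seg r1 a (m - a)) eqn:Es; [exfalso; eapply seg_ne; eauto|reflexivity].
    - rewrite Hlpi. unfold W. rewrite last_app_ne by (simpl; congruence).
      rewrite last_app_ne by exact Hrne. rewrite last_rev, seg_hd'. reflexivity. }
  apply Hinc in Hq. unfold W in Hq. apply in_app_or in Hq. destruct Hq as [Hq|Hq].
  - left. apply seg_In in Hq. destruct Hq as [i [Hi ->]]. exists (a + i). split; [lia|auto].
  - apply in_app_or in Hq. destruct Hq as [Hq|Hq]; [right; left; auto|].
    right; right. apply in_rev in Hq. apply seg_In in Hq. destruct Hq as [i [Hi ->]].
    exists (b + i). split; [lia|auto].
Qed.

Lemma cross : forall (PA PB : V -> Prop) l x, walk adj (x :: l) -> PA x -> PB (last (x :: l) x) ->
  (forall y, In y (x :: l) -> PA y \/ PB y) -> (forall y, PA y -> PB y -> False) ->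
  exists u v, PA u /\ PB v /\ adj u v.
Proof.
  intros PA PB. induction l as [|y l IH]; intros x Hw Ha Hb Hall Hex.
  - simpl in Hb. exfalso; eauto.
  - destruct Hw as [Hxy Hw].
    destruct (Hall y (or_intror (or_introl eq_refl))) as [Hy|Hy].
    + apply (IH y); auto.
      * rewrite (last_cons2 x (y :: l)) in Hb by congruence.
        rewrite (last_indep _ _ x) by congruence. exact Hb.
      * intros z Hz. apply Hall. right. exact Hz.
    + exists x, y. auto.
Qed.

Lemma bound : forall (f g : nat -> V), (forall m n, f m = f n -> m = n) ->
  forall N, exists N', forall a b, N' <= a -> b < N -> f a <> g b.
Proof.
  intros f g Hf. induction N as [|N [N' IH]].
  - exists 0. intros; lia.
  - destruct (classic (exists a0, f a0 = g N)) as [[a0 Ha0]|Hno].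
    + exists (Nat.max N' (S a0)). intros a b Ha Hb E.
      destruct (Nat.eq_dec b N) as [->|Hne].
      * rewrite <- Ha0 in E. apply Hf in E. lia.
      * apply (IH a b); auto; lia.
    + exists N'. intros a b Ha Hb E.
      destruct (Nat.eq_dec b N) as [->|Hne].
      * apply Hno. eauto.
      * apply (IH a b); auto; lia.
Qed.

Lemma avoid : forall (P : nat -> list V), (forall i j, i <> j -> disjoint_lists (P i) (P j)) ->
  forall X : list V, exists i, forall x, In x (P i) -> ~ In x X.
Proof.
  intros P Hd X. apply NNPP. intros Hc.
  assert (Hall : forall i, exists x, In x X /\ In x (P i)).
  { intros i. apply NNPP. intros Hn. apply Hc. exists i. intros x Hx HX. apply Hn. eauto. }
  assert (Hle : length (seq 0 (S (length X))) <= length X).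
  { apply (pigeon (fun i x => In x (P i))).
    - apply seq_NoDup.
    - intros i _. destruct (Hall i) as [x [? ?]]. eauto.
    - intros i i' x _ _ Hi Hi'. destruct (Nat.eq_dec i i') as [E|E]; auto.
      exfalso. exact (Hd i i' E x Hi Hi'). }
  rewrite length_seq in Hle. lia.
Qed.

Lemma in_seg0 : forall f n i, i <= n -> In (f i) (seg f 0 n).
Proof. intros f n i Hi. apply seg_In. exists i. split; auto. Qed.

Lemma E_strong : forall r1 r2, ray adj r1 -> ray adj r2 -> end_equiv adj r1 r2 ->
  forall N, exists a b, N <= a /\ N <= b /\ r1 a = r2 b.
Proof.
  intros r1 r2 H1 H2 [P [HP Hdisj]] N. apply NNPP. intros Hc.
  assert (H : forall a b, N <= a -> N <= b -> r1 a <> r2 b).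
  { intros a b Ha Hb E. apply Hc. eauto. }
  destruct (bound r1 r2 (proj1 H1) N) as [N1 HN1].
  destruct (bound r2 r1 (proj1 H2) N) as [M1 HM1].
  set (A := N + N1). set (B := N + M1).
  assert (Dis1 : forall a b, A <= a -> r1 a <> r2 b).
  { intros a b Ha. destruct (Nat.lt_ge_cases b N); [apply HN1; unfold A in *; lia|apply H; unfold A in *; lia]. }
  assert (Dis2 : forall a b, B <= b -> r1 a <> r2 b).
  { intros a b Hb E. destruct (Nat.lt_ge_cases a N).
    - apply (HM1 b a); [unfold B in *; lia|auto|auto].
    - apply (H a b); unfold B in *; auto; lia. }
  destruct (Hcon (r1 A) (r2 B)) as [Q [HQ [HhQ HlQ]]].
  destruct (avoid P Hdisj (Q ++ seg r1 0 A ++ seg r2 0 B)) as [i Hi].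
  destruct (HP i) as [HPi [x [Hhx [[m Hm] [n Hn]]]]].
  assert (HAm : A <= m).
  { destruct (Nat.le_gt_cases A m) as [|Hlt]; auto. exfalso.
    apply (Hi x). { apply hd_error_In; auto. }
    apply in_or_app; right; apply in_or_app; left. subst x. apply in_seg0. lia. }
  assert (HBn : B <= n).
  { destruct (Nat.le_gt_cases B n) as [|Hlt]; auto. exfalso.
    apply (Hi (r2 n)). { rewrite Hn. apply last_In. apply HPi. }
    apply in_or_app; right; apply in_or_app; right. apply in_seg0. lia. }
  assert (Hbr := bridge r1 r2 (P i) m n A B Q x H1 H2 HPi ltac:(rewrite Hm; auto)
     ltac:(rewrite Hn; auto) HAm HBn HQ HhQ ltac:(rewrite (last_indep _ _ (r1 A)) by apply HQ; auto)).
  destruct Q as [|q0 Q']; [destruct HQ; congruence|]. simpl in HhQ. inversion HhQ; subst q0.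
  destruct (cross (fun q => exists a, A <= a /\ q = r1 a) (fun q => exists b, B <= b /\ q = r2 b)
     Q' (r1 A)) as [u [v [[a [Ha ->]] [[b [Hb ->]] Huv]]]].
  - apply HQ.
  - exists A; auto.
  - exists B. split; auto.
  - intros y Hy. destruct (Hbr y Hy) as [[k [Hk ->]]|[Hin|[k [Hk ->]]]].
    + left. exists k. split; [lia|auto].
    + exfalso. apply (Hi y Hin). apply in_or_app. left. auto.
    + right. exists k. split; [lia|auto].
  - intros y [a [Ha ->]] [b [Hb E]]. exact (Dis1 a b Ha E).
  - destruct (avoid P Hdisj (seg r1 0 a ++ seg r2 0 b)) as [j Hj].
    destruct (HP j) as [HPj [x' [Hhx' [[m' Hm'] [n' Hn']]]]].
    assert (Ham : S a <= m').
    { destruct (Nat.le_gt_cases (S a) m') as [|Hlt]; auto. exfalso.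
      apply (Hj x'). { apply hd_error_In; auto. }
      apply in_or_app; left. subst x'. apply in_seg0. lia. }
    assert (Hbn : b <= n').
    { destruct (Nat.le_gt_cases b n') as [|Hlt]; auto. exfalso.
      apply (Hj (r2 n')). { rewrite Hn'. apply last_In. apply HPj. }
      apply in_or_app; right. apply in_seg0. lia. }
    assert (Hpi : is_path adj [r1 (S a); r1 a; r2 b]).
    { split; [congruence|split].
      - constructor; [|constructor; [|constructor; [simpl; tauto|constructor]]].
        + intros [E|[E|[]]].
          * apply (proj1 H1) in E. lia.
          * apply (Dis1 (S a) b); [lia|auto].
        + intros [E|[]]. apply (Dis1 a b); auto.
      - simpl. split; [apply Hsym; apply H1|split; auto]. }
    destruct (bridge r1 r2 (P j) m' n' (S a) b _ x' H1 H2 HPj ltac:(rewrite Hm'; auto)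
      ltac:(rewrite Hn'; auto) Ham Hbn Hpi eq_refl eq_refl (r1 a) ltac:(simpl; auto))
      as [[k [Hk E]]|[Hin|[k [Hk E]]]].
    + apply (proj1 H1) in E. lia.
    + apply (Hj _ Hin). apply in_or_app; left. apply in_seg0. lia.
    + exact (Dis1 a k Ha E).
Qed.

Lemma tail_of : forall r1 r2, ray adj r1 -> ray adj r2 ->
  (forall N, exists a b, N <= a /\ N <= b /\ r1 a = r2 b) ->
  exists a b, forall i, r1 (a + i) = r2 (b + i).
Proof.
  intros r1 r2 H1 H2 H. destruct (H 0) as [a0 [b0 [_ [_ E0]]]].
  exists a0, b0. intros i.
  destruct (H (a0 + b0 + i)) as [a' [b' [Ha' [Hb' E']]]].
  assert (Eq : seg r1 a0 (a' - a0) = seg r2 b0 (b' - b0)).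
  { apply (path_unique _ _ (r1 a0)).
    - apply seg_path; auto.
    - apply seg_path; auto.
    - rewrite !seg_hd. congruence.
    - rewrite !seg_last. replace (a0 + (a' - a0)) with a' by lia.
      replace (b0 + (b' - b0)) with b' by lia. auto. }
  rewrite <- (seg_nth r1 (a' - a0) a0 i (r1 0)) by lia.
  rewrite <- (seg_nth r2 (b' - b0) b0 i (r1 0)) by lia. rewrite Eq. reflexivity.
Qed.

Lemma pos_equiv : forall r1 r2, ray adj r1 ->
  (forall N, exists a b, N <= a /\ r1 a = r2 b) -> end_equiv adj r1 r2.
Proof.
  intros r1 r2 H1 H.
  assert (Hs : forall N, {a | N <= a /\ exists b, r1 a = r2 b}).
  { intros N. apply constructive_indefinite_description.
    destruct (H N) as [a [b [? ?]]]. eauto. }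
  set (f := fun N => proj1_sig (Hs N)).
  assert (Hf : forall N, N <= f N /\ exists b, r1 (f N) = r2 b).
  { intros N. unfold f. destruct (Hs N); auto. }
  set (g := fix g n := match n with 0 => f 0 | S n => f (S (g n)) end).
  assert (Hg : forall n, g n < g (S n)).
  { intros n. simpl. destruct (Hf (S (g n))). lia. }
  assert (Hmono : forall n k, g n < g (S (n + k))).
  { intros n k. induction k as [|k IH].
    - rewrite Nat.add_0_r. apply Hg.
    - specialize (Hg (S (n + k))). rewrite Nat.add_succ_r. lia. }
  assert (Hgi : forall i j, g i = g j -> i = j).
  { intros i j E. destruct (Nat.lt_total i j) as [Hl|[Hl|Hl]]; auto.
    - specialize (Hmono i (j - S i)). replace (S (i + (j - S i))) with j in Hmono by lia. lia.
    - specialize (Hmono j (i - S j)). replace (S (j + (i - S j))) with i in Hmono by lia. lia. }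
  exists (fun i => [r1 (g i)]). split.
  - intros i. split.
    + split; [congruence|split; [constructor; [simpl; tauto|constructor]|simpl; auto]].
    + exists (r1 (g i)). split; [reflexivity|]. split; [eauto|].
      assert (Hgf : exists b, r1 (g i) = r2 b).
      { destruct i; simpl; apply Hf. }
      destruct Hgf as [b Hb]. exists b. simpl. auto.
  - intros i j Hij x [<-|[]] [E|[]]. apply (proj1 H1) in E. apply Hgi in E. auto.
Qed.

End Tree.
Arguments seg {V}. Arguments seg_path {V adj}. Arguments seg_hd {V}. Arguments seg_last {V}.
Arguments seg_nth {V}. Arguments seg_len {V}. Arguments last_cons2 {V}. Arguments last_indep {V}.

Section Lev.
Variable V : Type.
Variable adj : V -> V -> Prop.
Hypothesis Hsym : forall x y, adj x y -> adj y x.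
Hypothesis Hirr : forall x, ~ adj x x.
Hypothesis Hcon : connected_graph adj.
Hypothesis Hnc : ~ has_cycle adj.
Variable r : nat -> V.
Hypothesis Hr : ray adj r.

Definition Merge (rho : nat -> V) a b := forall i, rho (a + i) = r (b + i).

Lemma toward_unique : forall r1 r2 a1 b1 a2 b2, ray adj r1 -> ray adj r2 ->
  Merge r1 a1 b1 -> Merge r2 a2 b2 -> r1 0 = r2 0 ->
  (forall i, r1 i = r2 i) /\ b1 + a2 = b2 + a1.
Proof.
  intros r1 r2 a1 b1 a2 b2 H1 H2 M1 M2 E0.
  assert (K : forall i, seg r1 0 (a1 + b2 + i) = seg r2 0 (a2 + b1 + i)).
  { intros i. apply (path_unique V adj Hsym Hnc _ _ (r 0)).
    - apply seg_path; auto.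
    - apply seg_path; auto.
    - rewrite !seg_hd. congruence.
    - rewrite !seg_last. simpl. rewrite <- Nat.add_assoc, M1, <- Nat.add_assoc, M2.
      f_equal. lia. }
  split.
  - intros i. pose proof (seg_nth r1 (a1 + b2 + i) 0 i (r 0) ltac:(lia)) as A1.
    pose proof (seg_nth r2 (a2 + b1 + i) 0 i (r 0) ltac:(lia)) as A2.
    simpl in A1, A2. rewrite <- A1, <- A2, K. reflexivity.
  - specialize (K 0). apply (f_equal (@length V)) in K. rewrite !seg_len in K. lia.
Qed.

Definition shiftf (rho : nat -> V) j := fun i => rho (j + i).
Definition consf (y : V) (rho : nat -> V) := fun i => match i with 0 => y | S i' => rho i' end.

Lemma shift_ray : forall rho j, ray adj rho -> ray adj (shiftf rho j).
Proof.
  intros rho j [Hi Ha]. split; unfold shiftf.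
  - intros m n E. apply Hi in E. lia.
  - intros n. rewrite Nat.add_succ_r. apply Ha.
Qed.

Lemma shift_merge : forall rho j a b, Merge rho a b -> Merge (shiftf rho j) a (b + j).
Proof.
  intros rho j a b M i. unfold shiftf. replace (j + (a + i)) with (a + (j + i)) by lia.
  rewrite M. f_equal. lia.
Qed.

Lemma cons_ray : forall rho y, ray adj rho -> adj y (rho 0) -> (forall j, rho j <> y) ->
  ray adj (consf y rho).
Proof.
  intros rho y [Hi Ha] Hy Hn. split.
  - intros [|m] [|n] E; simpl in E; auto.
    + exfalso. apply (Hn n). auto.
    + exfalso. apply (Hn m). auto.
  - intros [|n]; simpl; auto.
Qed.

Lemma cons_merge : forall rho y a b, Merge rho a b -> Merge (consf y rho) (S a) b.
Proof. intros rho y a b M i. simpl. apply M. Qed.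

Lemma exists_toward : forall x, exists rho a b, ray adj rho /\ Merge rho a b /\ rho 0 = x.
Proof.
  assert (K : forall l x, walk adj (x :: l) -> (exists c, last (x :: l) x = r c) ->
     exists rho a b, ray adj rho /\ Merge rho a b /\ rho 0 = x).
  { induction l as [|y l IH]; intros x Hw [c Hc].
    - simpl in Hc. exists (shiftf r c), 0, c. split; [apply shift_ray; auto|split].
      + intros i. unfold shiftf. f_equal; lia.
      + unfold shiftf. rewrite Nat.add_0_r. auto.
    - destruct Hw as [Hxy Hw].
      destruct (IH y Hw) as [rho [a [b [Hrho [M E]]]]].
      { exists c. rewrite <- Hc. rewrite (last_cons2 x (y :: l)) by congruence.
        apply last_indep. congruence. }
      destruct (classic (exists j, rho j = x)) as [[j Hj]|Hno].
      + exists (shiftf rho j), a, (b + j). split; [apply shift_ray; auto|split].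
        * apply shift_merge; auto.
        * unfold shiftf. rewrite Nat.add_0_r. auto.
      + exists (consf x rho), (S a), b. split; [apply cons_ray; auto|split].
        * congruence.
        * intros j Hj. apply Hno. eauto.
        * apply cons_merge; auto.
        * reflexivity. }
  intros x. destruct (Hcon x (r 0)) as [p [Hp [Hh Hl]]].
  destruct p as [|x' l]; [destruct Hp; congruence|]. simpl in Hh. inversion Hh; subst x'.
  apply (K l x); [apply Hp|]. exists 0. auto.
Qed.

Definition Lev x (z : Z) := exists rho a b, ray adj rho /\ Merge rho a b /\ rho 0 = x /\
  z = (Z.of_nat b - Z.of_nat a)%Z.

Lemma Lev_fun : forall x z1 z2, Lev x z1 -> Lev x z2 -> z1 = z2.
Proof.
  intros x z1 z2 [r1 [a1 [b1 [H1 [M1 [E1 ->]]]]]] [r2 [a2 [b2 [H2 [M2 [E2 ->]]]]]].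
  destruct (toward_unique r1 r2 a1 b1 a2 b2 H1 H2 M1 M2 ltac:(congruence)) as [_ K]. lia.
Qed.

Lemma Lev_ex : forall x, exists z, Lev x z.
Proof.
  intros x. destruct (exists_toward x) as [rho [a [b [H [M E]]]]].
  exists (Z.of_nat b - Z.of_nat a)%Z. exists rho, a, b. auto.
Qed.

Definition Up x y := exists rho a b, ray adj rho /\ Merge rho a b /\ rho 0 = x /\ rho 1 = y.

Lemma Up_fun : forall x y1 y2, Up x y1 -> Up x y2 -> y1 = y2.
Proof.
  intros x y1 y2 [r1 [a1 [b1 [H1 [M1 [E1 F1]]]]]] [r2 [a2 [b2 [H2 [M2 [E2 F2]]]]]].
  destruct (toward_unique r1 r2 a1 b1 a2 b2 H1 H2 M1 M2 ltac:(congruence)) as [K _].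
  rewrite <- F1, <- F2. apply K.
Qed.

Lemma Up_adj : forall x y, Up x y -> adj x y.
Proof. intros x y [rho [a [b [H [M [E F]]]]]]. subst. apply H. Qed.

Lemma Up_lev : forall x y z, Up x y -> Lev x z -> Lev y (z + 1)%Z.
Proof.
  intros x y z [rho [a [b [H [M [E F]]]]]] HL.
  assert (z = (Z.of_nat b - Z.of_nat a)%Z).
  { apply (Lev_fun x); auto. exists rho, a, b. auto. }
  subst z. exists (shiftf rho 1), a, (b + 1). split; [apply shift_ray; auto|split].
  - apply shift_merge; auto.
  - split; [auto|lia].
Qed.

Lemma adj_dich : forall x y, adj x y -> Up x y \/ Up y x.
Proof.
  intros x y Hxy. destruct (exists_toward x) as [rho [a [b [H [M E]]]]].
  destruct (classic (exists j, rho j = y)) as [[j Hj]|Hno].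
  - destruct j as [|[|j]].
    + subst. exfalso. eapply Hirr; eauto.
    + left. exists rho, a, b. auto.
    + exfalso. apply Hnc. exists (seg rho 0 (S (S j))). split; [apply seg_path; auto|split].
      * rewrite seg_len. lia.
      * exists (rho 0). split; [apply seg_hd|]. rewrite seg_last. simpl. rewrite Hj, E.
        apply Hsym; auto.
  - right. exists (consf y rho), (S a), b. split; [apply cons_ray; auto|split].
    + rewrite E. apply Hsym; auto.
    + intros j Hj. apply Hno; eauto.
    + apply cons_merge; auto.
    + split; reflexivity || (simpl; auto).
Qed.

Lemma down_persist : forall R n, ray adj R -> Up (R (S n)) (R n) -> Up (R (S (S n))) (R (S n)).
Proof.
  intros R n HR HU. destruct (adj_dich (R (S n)) (R (S (S n)))) as [HU'|HU']; [apply HR| |auto].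
  exfalso. pose proof (Up_fun _ _ _ HU HU') as E. apply (proj1 HR) in E. lia.
Qed.

Lemma all_up_toward : forall R, ray adj R -> (forall n, Up (R n) (R (S n))) ->
  exists a b, Merge R a b.
Proof.
  intros R HR HU. destruct (exists_toward (R 0)) as [s [a [b [Hs [Ms Es]]]]].
  assert (K : forall n, R n = s n).
  { induction n as [|n IH]; auto.
    apply (Up_fun (R n)); auto. rewrite IH.
    exists (shiftf s n), a, (b + n). split; [apply shift_ray; auto|split; [apply shift_merge; auto|]].
    unfold shiftf. rewrite Nat.add_0_r, Nat.add_1_r. auto. }
  exists a, b. intros i. rewrite K. apply Ms.
Qed.

Lemma down_levels : forall R n0 z0, ray adj R -> Up (R (S n0)) (R n0) -> Lev (R n0) z0 ->
  forall t, Lev (R (n0 + t)) (z0 - Z.of_nat t)%Z.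
Proof.
  intros R n0 z0 HR HU HL.
  assert (HD : forall t, Up (R (S (n0 + t))) (R (n0 + t))).
  { induction t as [|t IH]. { rewrite Nat.add_0_r. auto. }
    rewrite Nat.add_succ_r. apply down_persist; auto. }
  induction t as [|t IH]. { rewrite Nat.add_0_r. replace (z0 - Z.of_nat 0)%Z with z0 by lia. auto. }
  destruct (Lev_ex (R (n0 + S t))) as [w Hw].
  rewrite Nat.add_succ_r in Hw |- *.
  pose proof (Up_lev _ _ _ (HD t) Hw) as K.
  pose proof (Lev_fun _ _ _ K IH). replace (z0 - Z.of_nat (S t))%Z with w by lia. auto.
Qed.

End Lev.

Lemma ev_all : forall (P : nat -> Z -> Prop), (forall j, exists L, forall L', (L' <= L)%Z -> P j L') ->
  forall k, exists L, forall j, j <= k -> forall L', (L' <= L)%Z -> P j L'.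
Proof.
  intros P H. induction k as [|k [L IH]].
  - destruct (H 0) as [L HL]. exists L. intros j Hj. assert (j = 0) by lia. subst. auto.
  - destruct (H (S k)) as [L' HL']. exists (Z.min L L'). intros j Hj L'' HL''.
    destruct (Nat.eq_dec j (S k)) as [->|Hne].
    + apply HL'. lia.
    + apply IH; lia.
Qed.

Section Grp.
Variables (G : Type) (mul : G -> G -> G) (one : G) (inv : G -> G).
Variables (V : Type) (adj : V -> V -> Prop) (act : G -> V -> V).
Hypothesis Hg : is_group mul one inv.
Hypothesis Ha : is_graph_action mul one adj act.
Hypothesis Hfree : free_action one act.
Hypothesis Hsym : forall x y, adj x y -> adj y x.
Hypothesis Hirr : forall x, ~ adj x x.
Hypothesis Hcon : connected_graph adj.
Hypothesis Hnc : ~ has_cycle adj.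
Variable r : nat -> V.
Hypothesis Hr : ray adj r.
Hypothesis Hstab : stabilizes_end adj act r.

Lemma act_inv : forall g x, act (inv g) (act g x) = x.
Proof.
  intros g x. destruct Ha as [H1 [H2 _]]. destruct Hg as [_ [_ [_ [Hl _]]]].
  rewrite <- H2, Hl. apply H1.
Qed.

Lemma ray_act : forall g rho, ray adj rho -> ray adj (fun i => act g (rho i)).
Proof.
  intros g rho [Hi Hadj]. split.
  - intros m n E. apply Hi. rewrite <- (act_inv g (rho m)), E. apply act_inv.
  - intros n. apply Ha. apply Hadj.
Qed.

Lemma Tg : forall g, exists c d, forall i, act g (r (c + i)) = r (d + i).
Proof.
  intros g.
  assert (Hrr : end_equiv adj r r).
  { apply pos_equiv; auto. intros N. exists N, N. auto. }
  pose proof (Hstab g r Hr Hrr) as He.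
  apply (tail_of V adj Hsym Hnc (fun n => act g (r n)) r); [apply ray_act; auto|auto|].
  apply (E_strong V adj Hsym Hcon Hnc); [apply ray_act; auto|auto|auto].
Qed.

Lemma lev_shift : forall g, exists sg : Z,
  (forall x z, Lev V adj r x z -> Lev V adj r (act g x) (z + sg)%Z) /\ (sg = 0%Z -> g = one).
Proof.
  intros g. destruct (Tg g) as [c [d Hcd]].
  exists (Z.of_nat d - Z.of_nat c)%Z. split.
  - intros x z [rho [a [b [Hrho [M [E ->]]]]]].
    exists (fun i => act g (rho i)), (a + c), (d + b). split; [apply ray_act; auto|split].
    + intros i. replace (a + c + i) with (a + (c + i)) by lia. rewrite M.
      replace (b + (c + i)) with (c + (b + i)) by lia. rewrite Hcd. f_equal. lia.
    + split; [rewrite E; auto|lia].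
  - intros E. apply (Hfree g (r c)). specialize (Hcd 0).
    rewrite !Nat.add_0_r in Hcd. replace d with c in Hcd by lia. auto.
Qed.

Lemma lev_same : forall g x z, Lev V adj r x z -> Lev V adj r (act g x) z -> g = one.
Proof.
  intros g x z H1 H2. destruct (lev_shift g) as [sg [K1 K2]]. apply K2.
  pose proof (Lev_fun V adj Hsym Hnc r _ _ _ (K1 _ _ H1) H2). lia.
Qed.

Definition TW (R : nat -> V) := exists a b, Merge V r R a b.

Lemma TW_equiv : forall R1 R2, ray adj R1 -> TW R1 -> TW R2 -> end_equiv adj R1 R2.
Proof.
  intros R1 R2 H1 [a1 [b1 M1]] [a2 [b2 M2]]. apply pos_equiv; auto.
  intros N. exists (a1 + (b2 + N)), (a2 + (b1 + N)). split; [lia|].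
  rewrite M1, M2. f_equal. lia.
Qed.

Lemma main_contra : forall (s : list V), (forall v, exists u g, In u s /\ act g u = v) ->
  forall Rg : nat -> nat -> V, (forall j, ray adj (Rg j)) ->
  (forall j j', j <> j' -> ~ end_equiv adj (Rg j) (Rg j')) ->
  (forall j, ~ TW (Rg j)) -> False.
Proof.
  intros s Hs Rg HR Hne HT.
  assert (Hd : forall j, exists p : nat * Z,
     forall t, Lev V adj r (Rg j (fst p + t)) (snd p - Z.of_nat t)%Z).
  { intros j.
    assert (Hn : exists n, Up V adj r (Rg j (S n)) (Rg j n)).
    { apply NNPP. intros Hc. apply (HT j).
      apply (all_up_toward V adj Hsym Hcon Hnc r Hr); auto.
      intros n. destruct (adj_dich V adj Hsym Hirr Hcon Hnc r Hr (Rg j n) (Rg j (S n)))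
        as [U|U]; [apply HR|auto|]. exfalso. apply Hc. eauto. }
    destruct Hn as [n0 Hn0]. destruct (Lev_ex V adj Hcon r Hr (Rg j n0)) as [z0 Hz0].
    exists (n0, z0). simpl. apply (down_levels V adj Hsym Hirr Hcon Hnc r Hr); auto. }
  set (pj := fun j => proj1_sig (constructive_indefinite_description _ (Hd j))).
  assert (Hpj : forall j t, Lev V adj r (Rg j (fst (pj j) + t)) (snd (pj j) - Z.of_nat t)%Z).
  { intros j. unfold pj. destruct (constructive_indefinite_description _ (Hd j)). auto. }
  set (vert := fun j L => Rg j (fst (pj j) + Z.to_nat (snd (pj j) - L))).
  assert (Hvl : forall j L, (L <= snd (pj j))%Z -> Lev V adj r (vert j L) L).
  { intros j L HL. unfold vert. pose proof (Hpj j (Z.to_nat (snd (pj j) - L))) as K.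
    rewrite Z2Nat.id in K by lia. replace (snd (pj j) - (snd (pj j) - L))%Z with L in K by lia.
    exact K. }
  assert (Hsep : forall j j', j <> j' -> exists Ls, forall L, (L <= Ls)%Z -> vert j L <> vert j' L).
  { intros j j' Hjj'. apply NNPP. intros Hc. apply (Hne j j' Hjj').
    apply pos_equiv; auto. intros N.
    apply NNPP. intros Hc2. apply Hc. exists (snd (pj j) - Z.of_nat N)%Z. intros L HL E.
    apply Hc2. exists (fst (pj j) + Z.to_nat (snd (pj j) - L)),
      (fst (pj j') + Z.to_nat (snd (pj j') - L)). split; [lia|]. exact E. }
  set (k := length s).
  destruct (ev_all (fun j L => (L <= snd (pj j))%Z /\
      forall j', j' <= k -> j <> j' -> vert j L <> vert j' L)) with (k := k) as [L HL].
  { intros j.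
    destruct (ev_all (fun j' L => j <> j' -> vert j L <> vert j' L)) with (k := k) as [L1 HL1].
    { intros j'. destruct (Nat.eq_dec j j') as [E|E].
      - exists 0%Z. intros. contradiction.
      - destruct (Hsep j j' E) as [Ls HLs]. exists Ls. intros L' HL' _. apply HLs; auto. }
    exists (Z.min L1 (snd (pj j))). intros L' HL'. split; [lia|].
    intros j' Hj' Hjj'. apply (HL1 j' Hj'); auto. lia. }
  assert (Hle : length (seq 0 (S k)) <= length s).
  { apply (pigeon (fun j u => exists g, act g u = vert j L)).
    - apply seq_NoDup.
    - intros j _. destruct (Hs (vert j L)) as [u [g [Hu Hg']]]. eauto.
    - intros j j' u Hj Hj' [g Eg] [g' Eg'].
      apply in_seq in Hj. apply in_seq in Hj'.
      destruct (Nat.eq_dec j j') as [E|E]; auto. exfalso.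
      assert (Eh : act (mul g' (inv g)) (vert j L) = vert j' L).
      { destruct Ha as [_ [H2 _]]. rewrite H2, <- Eg, act_inv. auto. }
      assert (Hid : mul g' (inv g) = one).
      { apply (lev_same _ (vert j L) L).
        - apply Hvl. apply (HL j ltac:(lia) L ltac:(lia)).
        - rewrite Eh. apply Hvl. apply (HL j' ltac:(lia) L ltac:(lia)). }
      rewrite Hid in Eh. destruct Ha as [H1 _]. rewrite H1 in Eh.
      apply (proj2 (HL j ltac:(lia) L ltac:(lia)) j' ltac:(lia) E). auto. }
  rewrite length_seq in Hle. unfold k in Hle. lia.
Qed.

End Grp.

Theorem lemma4p2 (G : Type) (mul : G -> G -> G) (one : G) (inv : G -> G)
  (V : Type) (adj : V -> V -> Prop) (act : G -> V -> V) :
  is_group mul one inv ->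
  is_tree adj ->
  is_graph_action mul one adj act ->
  quasi_transitive act ->
  infinitely_many_ends adj ->
  stabilizes_some_end adj act ->
  ~ free_action one act.
Proof.
  intros Hg [Hsym [Hirr [Hcon Hnc]]] Ha [s Hs] [Rf [HRf Hineq]] [r [Hr Hstab]] Hfree.
  destruct (classic (exists i0, TW V r (Rf i0))) as [[i0 Hi0]|Hno].
  - apply (main_contra G mul one inv V adj act Hg Ha Hfree Hsym Hirr Hcon Hnc r Hr Hstab s Hs
      (fun j => Rf (S (i0 + j)))).
    + intros j. apply HRf.
    + intros j j' Hjj'. apply Hineq. lia.
    + intros j Hj. apply (Hineq i0 (S (i0 + j))); [lia|].
      apply (TW_equiv V adj r); auto.
  - apply (main_contra G mul one inv V adj act Hg Ha Hfree Hsym Hirr Hcon Hnc r Hr Hstab s Hs Rf);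
      auto.
    intros j Hj. apply Hno. eauto.
Qed.
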